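(* If $A\subset\mathbb{R}^d$ is a finite set in general position, then for all $K\in\mathbb{N}$, every simplicial complex in the bifiltration $\textnormal{S-Del}^{\le K}$ has dimension at most $2\binom{d+1}{\lfloor\frac{d+1}{2}\rfloor}$.
   Context: For $\tilde A\subseteq A$ let $\mathrm{Ball}_r(\tilde A)=\{b: \|b-\tilde a\|\le r\ \forall\tilde a\in\tilde A\}$ and for $|\tilde A|=k$ let $\mathrm{Vor}(\tilde A)=\{b\in\mathbb{R}^d: \|b-\tilde a\|\le\|b-a\|\ \forall\tilde a\in\tilde A, a\in A\setminus\tilde A\}$. Let $\mathrm{Del}^{+}_{r,k}$ be the abstract simplicial complex whose vertices are subsets $\tilde A\subseteq A$ with $|\tilde A|\in\{k,k+1\}$ and whose simplices are the sets $\sigma$ of such subsets with $\bigcap_{\tilde A\in\sigma}(\mathrm{Ball}_r(\tilde A)\cap\mathrm{Vor}(\tilde A))\neq\emptyset$. For $r\ge0$ and $k\in\mathbb{N}=\{1,2,\dots\}$, $\textnormal{S-Del}^{\le K}_{r,k}=\bigcup_{i=k}^{K-1}\mathrm{Del}^{+}_{r,i}$. *)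

(* Defs.v *)
From HB Require Import structures.
From mathcomp Require Import all_boot all_order all_algebra.
From mathcomp Require Import finmap.
From mathcomp Require Import reals.
Set Implicit Arguments. Unset Strict Implicit. Unset Printing Implicit Defensive.
Import Order.TTheory GRing.Theory Num.Theory.
Local Open Scope ring_scope.
Local Open Scope fset_scope.

Section Defs.
Variables (R : realType) (d : nat).
Local Notation pt := 'rV[R]_d.

Definition enorm (v : pt) : R := Num.sqrt (\sum_(j < d) (v ord0 j) ^+ 2).

Definition affinely_independent (S : {fset pt}) : Prop :=
  forall lam : pt -> R,
    \sum_(p <- S) lam p = 0 ->
    \sum_(p <- S) lam p *: p = 0 ->
    forall p, p \in S -> lam p = 0.

Definition cospherical (S : {fset pt}) : Prop :=
  exists (c : pt) (rho : R), forall p, p \in S -> enorm (p - c) = rho.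

(* General position: no j+2 points on a common j-flat for j < d (i.e. every
   subset of at most d+1 points is affinely independent), and no d+2 points
   on a common sphere. *)
Definition general_position (A : {fset pt}) : Prop :=
  (forall S, S `<=` A -> (#|` S| <= d.+1)%N -> affinely_independent S) /\
  (forall S, S `<=` A -> #|` S| = d.+2 -> ~ cospherical S).

Definition inBall (r : R) (At : {fset pt}) (b : pt) : Prop :=
  forall a, a \in At -> enorm (b - a) <= r.

Definition inVor (A At : {fset pt}) (b : pt) : Prop :=
  forall at_ a, at_ \in At -> a \in A `\` At -> enorm (b - at_) <= enorm (b - a).

Definition DelPlus_vertex (A : {fset pt}) (k : nat) (At : {fset pt}) : Prop :=
  At `<=` A /\ (#|` At| = k \/ #|` At| = k.+1).

Definition DelPlus (A : {fset pt}) (r : R) (k : nat) (sigma : {fset {fset pt}}) : Prop :=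
  (forall At, At \in sigma -> DelPlus_vertex A k At) /\
  exists b : pt, forall At, At \in sigma -> inBall r At b /\ inVor A At b.

Definition SDel (A : {fset pt}) (K : nat) (r : R) (k : nat) (sigma : {fset {fset pt}}) : Prop :=
  exists i : nat, (k <= i)%N /\ (i <= K.-1)%N /\ DelPlus A r i sigma.

End Defs.

(* Main.v *)
Require Import Defs.
From HB Require Import structures.
From mathcomp Require Import all_boot all_order all_algebra.
From mathcomp Require Import finmap.
From mathcomp Require Import reals.
From mathcomp Require Import zify.
Import Order.TTheory GRing.Theory Num.Theory.
Local Open Scope ring_scope.
Local Open Scope fset_scope.

Lemma half_facts n : (n./2 + n./2 <= n /\ n <= n./2 + n./2 + 1)%N.
Proof. have := odd_double_half n. rewrite -addnn. case: (odd n) => /=; lia. Qed.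

Lemma bin_step n m : (m < n./2)%N -> ('C(n, m) <= 'C(n, m.+1))%N.
Proof.
move=> h.
have h2 : (m.+1 <= n - m)%N by have := half_facts n; lia.
have e := mul_bin_left n m.
have : (m.+1 * 'C(n, m) <= m.+1 * 'C(n, m.+1))%N.
  rewrite e. by apply: leq_mul.
by rewrite leq_pmul2l.
Qed.

Lemma bin_half_low n m : (m <= n./2)%N -> ('C(n, m) <= 'C(n, n./2))%N.
Proof.
move=> h. have [k ek] : exists k, n./2 = (m + k)%N by exists (n./2 - m)%N; lia.
elim: k m h ek => [|k IH] m h ek; first by rewrite ek addn0.
apply: leq_trans (IH m.+1 _ _); last by lia.
  apply: bin_step; lia.
lia.
Qed.

Lemma bin_half n m : ('C(n, m) <= 'C(n, n./2))%N.
Proof.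
case: (leqP m n./2) => h; first exact: bin_half_low.
case: (leqP m n) => hmn; last by rewrite bin_small.
rewrite -bin_sub //.
case: (leqP (n - m) n./2) => h2; first exact: bin_half_low.
have ee : m = (n - n./2)%N by have := half_facts n; lia.
have ee2 : (n - m = n./2)%N by have := half_facts n; lia.
by rewrite ee2.
Qed.
Lemma count0 (T : choiceType) (G : {fset {fset T}}) :
  (forall B, B \in G -> #|` B| = 0%N) -> (#|` G| <= 1)%N.
Proof.
move=> h. have : G `<=` [fset fset0].
  apply/fsubsetP => B hB. rewrite inE. apply/eqP. exact: cardfs0_eq (h B hB).
move/fsubset_leq_card. by rewrite cardfs1.
Qed.

Lemma count_sub (T : choiceType) n : forall (S : {fset T}) (G : {fset {fset T}}) j,
  #|` S| = n -> (forall B, B \in G -> B `<=` S /\ #|` B| = j) -> (#|` G| <= 'C(n, j))%N.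
Proof.
elim: n => [|n IH] S G j hS hG.
  have S0 : S = fset0 by apply: cardfs0_eq.
  case: j hG => [|j] hG.
    rewrite bin0. apply: count0 => B /hG [] //.
  rewrite bin0n /=. rewrite leqn0 cardfs_eq0. apply/eqP/fsetP => B.
  rewrite inE. apply/negP => /hG [h1 h2].
  move: h1; rewrite S0 fsubset0 => /eqP e. by rewrite e cardfs0 in h2.
case: j hG => [|j] hG.
  rewrite bin0. apply: count0 => B /hG [] //.
have [x xS] : exists x, x \in S.
  apply/fset0Pn. by rewrite -cardfs_gt0 hS.
have hS' : #|` S `\ x| = n by move: hS; rewrite (cardfsD1 x) xS; lia.
set P := [fset B in G | x \in B].
rewrite -(cardfsID P G) binS addnC.
apply: leq_add.
  apply: (IH (S `\ x)) => // B. rewrite !inE => /andP [BP BG].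
  have [h1 h2] := hG B BG. split=> //.
  apply/fsubsetP => y yB. rewrite in_fsetD1 (fsubsetP h1) // andbT.
  apply/eqP => e; subst y. by rewrite BG yB in BP.
have -> : #|` G `&` P| = #|` [fset B `\ x | B in G `&` P]|.
  symmetry; apply: card_in_imfset => B1 B2 /=. rewrite !inE => /andP [h1 h2] /andP [h3 h4] e.
  case/andP: h2 => _ x1. case/andP: h4 => _ x2.
  by rewrite -(fsetD1K x1) e fsetD1K.
apply: (IH (S `\ x)) => // C /imfsetP [B /= hB ->].
move: hB; rewrite !inE => /andP [BG /andP [_ xB]].
have [h1 h2] := hG B BG. split.
  apply/fsubsetP => y; rewrite !inE => /andP [-> yB] /=. exact: (fsubsetP h1).
move: h2; rewrite (cardfsD1 x) xB. lia.
Qed.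
Lemma seq_argmax (T : eqType) (R : realDomainType) (f : T -> R) (s : seq T) :
  s != [::] -> exists2 x, x \in s & forall q, q \in s -> f q <= f x.
Proof.
elim: s => [//|a s IH] _.
case: (s =P [::]) => [->|/eqP sN].
  exists a; first by rewrite inE eqxx.
  by move=> q; rewrite inE => /eqP ->.
have [y ys hy] := IH sN.
case: (leP (f a) (f y)) => h.
  exists y; first by rewrite inE ys orbT.
  by move=> q; rewrite inE => /orP [/eqP ->|/hy].
exists a; first by rewrite inE eqxx.
move=> q; rewrite inE => /orP [/eqP ->//|/hy hq].
by apply: le_trans hq (ltW h).
Qed.

Lemma enormN (R : realType) d (u v : 'rV[R]_d) : enorm (u - v) = enorm (v - u).
Proof.
rewrite /enorm; congr Num.sqrt; apply: eq_bigr => j _.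
by rewrite -opprB mxE sqrrN.
Qed.

Lemma fset_take (T : choiceType) (S : {fset T}) n : (n <= #|` S|)%N ->
  exists2 S', S' `<=` S & #|` S'| = n.
Proof.
move=> h. exists [fset x in take n (enum_fset S)].
  apply/fsubsetP => x; rewrite inE => /mem_take. by [].
rewrite card_fseq undup_id; last by apply: take_uniq; apply: fset_uniq.
rewrite size_take. have : (size (enum_fset S) = #|` S|)%N by [].
move=> ->. case: ltnP => //. lia.
Qed.

Lemma family_bound (R : realType) d (A : {fset 'rV[R]_d}) (b : 'rV[R]_d) m
  (F : {fset {fset 'rV[R]_d}}) :
  general_position A -> (0 < m)%N ->
  (forall B, B \in F -> B `<=` A /\ #|` B| = m /\ inVor A B b) ->
  (#|` F| <= 'C(d.+1, (d.+1)./2))%N.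
Proof.
move=> [_ gp2] m0 hF.
case: (F =P fset0) => [->|/eqP FN]; first by rewrite cardfs0.
have [B0 B0F] := fset0Pn _ FN.
have [B0A [B0c B0V]] := hF B0 B0F.
set dist := fun p => enorm (b - p).
have [x0 x0B0 x0max] : exists2 x, x \in B0 & forall q, q \in B0 -> dist q <= dist x.
  apply: seq_argmax. apply/eqP => e.
  have : #|` B0| = 0%N by apply/eqP; rewrite cardfs_eq0; apply/eqP/fsetP => y; rewrite -[y \in B0]/(y \in enum_fset B0) e.
  lia.
set D := dist x0.
set L := [fset a in A | dist a < D].
set S := [fset a in A | dist a == D].
have key : forall B, B \in F -> L `<=` B /\ (forall p, p \in B -> dist p <= D).
  move=> B BF. have [BA [Bc BV]] := hF B BF.
  split.
    apply/fsubsetP => a; rewrite inE => /andP [aA ltaD].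
    apply/negPn/negP => aB.
    have hB : forall p, p \in B -> dist p <= dist a.
      move=> p pB. apply: BV => //. by rewrite in_fsetD aB aA.
    have x0B : x0 \notin B.
      apply/negP => /hB h. by move: (lt_le_trans ltaD h); rewrite ltxx.
    have BB0 : B `<=` B0.
      apply/fsubsetP => p pB. apply/negPn/negP => pB0.
      have h1 : D <= dist p.
        apply: B0V => //. by rewrite in_fsetD pB0 (fsubsetP BA).
      have := le_lt_trans (le_trans h1 (hB p pB)) ltaD. by rewrite ltxx.
    have := fsubset_cardP (esym (etrans Bc (esym B0c))).
    have eq : B0 =i B.
      move=> y. apply/idP/idP => hy; last by apply: (fsubsetP BB0).
      have := fsubset_cardP (etrans Bc (esym B0c)) BB0. by move=> /(_ y) ->.
    by rewrite -eq x0B0 in x0B.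
  move=> p pB. rewrite leNgt. apply/negP => ltDp.
  have B0B : B0 `<=` B.
    apply/fsubsetP => q qB0. apply/negPn/negP => qB.
    have h1 : dist p <= dist q.
      apply: BV => //. by rewrite in_fsetD qB (fsubsetP B0A).
    have := lt_le_trans ltDp (le_trans h1 (x0max q qB0)). by rewrite ltxx.
  have eq : B0 =i B.
    have := fsubset_cardP (etrans B0c (esym Bc)). by move=> /(_ B0B).
  have := x0max p. rewrite eq => /(_ pB) h. 
  have := lt_le_trans ltDp h. by rewrite ltxx.
have Scard : (#|` S| <= d.+1)%N.
  rewrite leqNgt. apply/negP => hlt.
  have [S' S'S cS'] := fset_take _ _ _ hlt.
  apply: (gp2 S') => //.
    apply: fsubset_trans S'S _. apply/fsubsetP => a. by rewrite inE => /andP [].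
  exists b, D => p pS'. have := fsubsetP S'S p pS'. rewrite inE => /andP [_ /eqP <-].
  by rewrite enormN.
set G := [fset B `\` L | B in F].
have -> : #|` F| = #|` G|.
  symmetry; apply: card_in_imfset => B1 B2 /= h1 h2 e.
  have [L1 _] := key B1 h1. have [L2 _] := key B2 h2.
  apply/fsetP => y.
  case yL: (y \in L).
    by rewrite (fsubsetP L1) ?(fsubsetP L2).
  have := congr1 (fun X => y \in X) e. by rewrite /= !in_fsetD yL.
apply: leq_trans (count_sub _ _ S G (m - #|` L|)%N erefl _) _.
  move=> C /imfsetP [B /= BF ->].
  have [BA [Bc _]] := hF B BF. have [LB hD] := key B BF.
  split; last by rewrite cardfsDS // Bc.
  apply/fsubsetP => y; rewrite in_fsetD => /andP [yL yB].
  rewrite inE; apply/andP; split; first exact: (fsubsetP BA).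
  rewrite eq_le hD //= leNgt.
  apply/negP => h; move/negP: yL; apply; rewrite inE; apply/andP; split=> //; exact: (fsubsetP BA).
apply: leq_trans (leq_bin2l _ Scard) _. exact: bin_half.
Qed.

Theorem lemma14 (R : realType) (d : nat) (A : {fset 'rV[R]_d}) :
  general_position A ->
  forall (K : nat), (1 <= K)%N ->
  forall (r : R) (k : nat), 0 <= r -> (1 <= k)%N ->
  forall sigma : {fset {fset 'rV[R]_d}},
    SDel A K r k sigma ->
    (#|` sigma| - 1 <= 2 * 'C(d.+1, (d.+1)./2))%N.
Proof.
move=> gp K K1 r k r0 k1 sigma [i [ki [iK [hv [b hb]]]]].
set P := [fset B in sigma | #|` B| == i].
rewrite -(cardfsID P sigma).
have h1 : (#|` sigma `&` P| <= 'C(d.+1, (d.+1)./2))%N.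
  apply: (family_bound _ _ A b i) => //; first lia.
  move=> B; rewrite !inE => /andP [BS /andP [_ /eqP Bc]].
  have [BA _] := hv B BS. have [_ BV] := hb B BS. by [].
have h2 : (#|` sigma `\` P| <= 'C(d.+1, (d.+1)./2))%N.
  apply: (family_bound _ _ A b i.+1) => //.
  move=> B; rewrite in_fsetD => /andP [BP BS].
  have [BA Bc] := hv B BS. have [_ BV] := hb B BS. split=> //; split=> //.
  case: Bc => // Bc. move/negP: BP; case; rewrite inE; apply/andP; split=> //; by rewrite Bc.
lia.
Qed.
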